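(* For a polymatroid $\mathrm P$ on $E$ of type $\mathbf a$, one has $\mathrm M_\pi(\mathrm P^\perp)=\mathrm M_\pi(\mathrm P)^\perp$.
   Context: $E=\{1,\dots,m\}$, $\mathbf a\in\mathbb Z^m_{\ge0}$, $n=\sum a_i$, $\widetilde E$ an $n$-element set, $\pi:\widetilde E\to E$ with $|\pi^{-1}(i)|=a_i$. Polymatroid of type $\mathbf a$: submodular monotone $\operatorname{rk}_{\mathrm P}:2^E\to\mathbb Z_{\ge0}$ with $\operatorname{rk}_{\mathrm P}(\emptyset)=0$, $\operatorname{rk}_{\mathrm P}(\{i\})\le a_i$, rank $r=\operatorname{rk}_{\mathrm P}(E)$. Its dual $\mathrm P^\perp$ is the type-$\mathbf a$ polymatroid with $\operatorname{rk}_{\mathrm P^\perp}(S)=\sum_{i\in S}a_i+\operatorname{rk}_{\mathrm P}(E\setminus S)-r$. The multisymmetric lift $\mathrm M_\pi(\mathrm P)$ is the matroid on $\widetilde E$ with rank function $\operatorname{rk}(U)=\min_{A\subseteq E}\{\operatorname{rk}_{\mathrm P}(A)+|U\setminus\pi^{-1}(A)|\}$. $\mathrm M^\perp$ is the usual matroid dual. *)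

(* Defs.v *)
From mathcomp Require Import all_boot.
Set Implicit Arguments. Unset Strict Implicit. Unset Printing Implicit Defensive.

Definition is_polymatroid (m : nat) (a : 'I_m -> nat) (rk : {set 'I_m} -> nat) : Prop :=
  [/\ rk set0 = 0,
      (forall A B : {set 'I_m}, A \subset B -> rk A <= rk B),
      (forall A B : {set 'I_m}, rk (A :|: B) + rk (A :&: B) <= rk A + rk B)
    & (forall i : 'I_m, rk [set i] <= a i)].

(* Dual polymatroid: rk^perp(S) = sum_{i in S} a_i + rk(E \ S) - rk(E)
   (the expression is always >= 0 for a polymatroid of type a). *)
Definition polymatroid_dual (m : nat) (a : 'I_m -> nat) (rk : {set 'I_m} -> nat)
  (S : {set 'I_m}) : nat :=
  (\sum_(i in S) a i + rk (~: S)) - rk setT.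

(* The minimum is over all A; the value at A = set0 (namely #|U|, as rk set0 = 0)
   is also used as the neutral element of minn, which does not change the min. *)
Definition lift_rank (m : nat) (T : finType) (pi : T -> 'I_m)
  (rk : {set 'I_m} -> nat) (U : {set T}) : nat :=
  \big[minn/ (rk set0 + #|U :\: pi @^-1: set0|)]_(A : {set 'I_m})
     (rk A + #|U :\: pi @^-1: A|).

Definition matroid_dual (T : finType) (r : {set T} -> nat) (U : {set T}) : nat :=
  (#|U| + r (~: U)) - r setT.

(* Main.v *)
Require Import Defs.
From mathcomp Require Import all_boot.
From mathcomp Require Import zify.

Section Aux.
Variable (I : finType).

Lemma bigmin_le (F : {set I} -> nat) A :
  \big[minn/F set0]_(B : {set I}) F B <= F A.
Proof.
have : A \in index_enum {set I} by rewrite mem_index_enum.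
elim: (index_enum _) => [|x s IH] //=.
rewrite inE big_cons => /orP [/eqP ->|/IH h]; first exact: geq_minl.
exact: leq_trans (geq_minr _ _) h.
Qed.

Lemma bigmin_ex (F : {set I} -> nat) :
  exists A, \big[minn/F set0]_(B : {set I}) F B = F A.
Proof.
apply: (big_ind (fun x => exists A, x = F A)).
- by exists set0.
- move=> x y [A ->] [B ->]; rewrite /minn; case: ltnP => _; [by exists A | by exists B].
- by move=> B _; exists B.
Qed.
End Aux.
Arguments bigmin_le {I}.
Arguments bigmin_ex {I}.

Theorem proposition3p6 (m : nat) (a : 'I_m -> nat) (T : finType) (pi : T -> 'I_m)
  (rk : {set 'I_m} -> nat) :
  (forall i : 'I_m, #|[set x | pi x == i]| = a i) ->
  is_polymatroid a rk ->
  forall U : {set T},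
    lift_rank pi (polymatroid_dual a rk) U = matroid_dual (lift_rank pi rk) U.
Proof.
move=> Ha [rk0 rkmono rksub rka] U.
have cardpre : forall S : {set 'I_m}, #|pi @^-1: S| = \sum_(i in S) a i.
  move=> S; rewrite -sum1_card (partition_big pi (mem S)); last by move=> x; rewrite inE.
  apply: eq_bigr => i iS; rewrite -Ha -sum1_card; apply: eq_bigl => x.
  rewrite !inE; case: eqP => [->|_]; rewrite ?andbT ?andbF //.
have subadd : forall B, rk B <= \sum_(i in B) a i.
  move=> B; move: {2}#|B| (erefl #|B|) => n; elim: n B => [|n IH] B cB.
    by move/eqP: cB; rewrite cards_eq0 => /eqP ->; rewrite rk0.
  have [B0|[x xB]] := set_0Vmem B; first by rewrite B0 cards0 in cB.
  rewrite (bigD1 x) //=.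
  have e : B = [set x] :|: (B :\ x) by rewrite setD1K.
  have h1 := rksub [set x] (B :\ x); rewrite -e in h1.
  have h2 := rka x.
  have h3 : rk (B :\ x) <= \sum_(i in B :\ x) a i.
    apply: IH; move: cB; rewrite (cardsD1 x B) xB; lia.
  have -> : \sum_(i | (i \in B) && (i != x)) a i = \sum_(i in B :\ x) a i.
    by apply: eq_bigl => i; rewrite !inE andbC.
  apply: leq_trans (leq_trans (leq_addr _ _) h1) _; exact: leq_add h2 h3.
have keyr : forall A, rk setT <= rk A + \sum_(i in ~: A) a i.
  move=> A; have := rksub A (~: A); rewrite setUCr.
  have := subadd (~: A); lia.
set r := rk setT.
have LT : lift_rank pi rk setT = r.
  rewrite /lift_rank; apply/eqP; rewrite eqn_leq; apply/andP; split.
    apply: leq_trans (bigmin_le (fun A : {set 'I_m} => rk A + #|[set: T] :\: pi @^-1: A|) setT) _.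
    by rewrite preimsetT setDv cards0 addn0.
  have [A ->] := bigmin_ex (fun A : {set 'I_m} => rk A + #|[set: T] :\: pi @^-1: A|).
  by rewrite setTD -preimsetC cardpre keyr.
set H := fun A => rk A + #|~: U :\: pi @^-1: A|.
set G := fun S => polymatroid_dual a rk S + #|U :\: pi @^-1: S|.
have GH : forall S, G S = (#|U| + H (~: S)) - r.
  move=> S; rewrite /G /H /polymatroid_dual -/r.
  have k := keyr (~: S); rewrite setCK in k.
  have c1 : #|U| = #|U :&: pi @^-1: S| + #|U :\: pi @^-1: S|.
    by rewrite -(cardsID (pi @^-1: S) U).
  have c2 : \sum_(i in S) a i = #|U :&: pi @^-1: S| + #|~: U :&: pi @^-1: S|.
    rewrite -cardpre -(cardsID U (pi @^-1: S)) setIC; congr (_ + _).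
    by rewrite setDE setIC.
  have c3 : (~: U) :\: pi @^-1: (~: S) = (~: U) :&: pi @^-1: S.
    by rewrite setDE preimsetC setCK.
  rewrite c3; lia.
rewrite /matroid_dual LT.
have -> : lift_rank pi (polymatroid_dual a rk) U = \big[minn/G set0]_(S : {set 'I_m}) G S.
  done.
have -> : lift_rank pi rk (~: U) = \big[minn/H set0]_(S : {set 'I_m}) H S.
  done.
apply/eqP; rewrite eqn_leq; apply/andP; split.
  have [A ->] := bigmin_ex H.
  apply: leq_trans (bigmin_le _ (~: A)) _.
  by rewrite GH setCK.
have [S ->] := bigmin_ex G.
rewrite GH; apply: leq_sub2r; rewrite leq_add2l; exact: bigmin_le.
Qed.
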